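(* Let $\mathcal{A}$ be a pOC with state set $Q$ whose underlying chain $\mathcal{X}$ is strongly connected, with trend $t>0$. Let $v$ be a potential and $|v|=v_{\max}-v_{\min}$. Let $$a:=\exp\left(-\frac{t^2}{2(|v|+t+1)^2}\right),$$ so that $0<a<1$. Let $c^{(0)}\ge|v|$ be an integer. Then $$[p^{(0)}(c^{(0)}){\downarrow}]\le\frac{a^{c^{(0)}}}{1-a}\quad\text{for all } p^{(0)}\in Q.$$ Moreover, if $c^{(0)}\ge6(|v|+t+1)^3/t^3$, then $[p^{(0)}(c^{(0)}){\downarrow}]\le1/2$ for all $p^{(0)}\in Q$.
   Context: A pOC is $\mathcal{A}=(Q,\delta^{=0},\delta^{>0},P^{=0},P^{>0})$ with the following components. - $\delta^{>0}\subseteq Q\times\{-1,0,1\}\times Q$ are the positive rules and $\delta^{=0}\subseteq Q\times\{0,1\}\times Q$ are the zero rules. Every state has both kinds of outgoing rule. - $P^{>0}$ and $P^{=0}$ are positive probability distributions over the outgoing rules of each state. $\mathcal{M}_\mathcal{A}$ is the Markov chain on configurations $p(i)$ with the following transitions: - $p(0)\to q(c)$ with probability $P^{=0}(p,c,q)$; - for $i\ge1$, $p(i)\to q(i+c)$ with probability $P^{>0}(p,c,q)$. $[r(c){\downarrow}]$ is the probability that a run initiated in $r(c)$ eventually reaches counter value zero. $\mathcal{X}$ is the finite Markov chain on $Q$ with transition matrix $A_{pq}=\sum_cP^{>0}(p,c,q)$. With $\alpha$ its invariant distribution and $s_p=\sum_{(p,c,q)\in\delta^{>0}}P^{>0}(p,c,q)c$,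 the trend is $t=\alpha s$. A potential is $v\in\mathbb{R}^Q$ with $s+Av=v+\mathbf{1}t$. $v_{\max}$ and $v_{\min}$ are its largest and smallest components. *)

(* Defs.v *)
From HB Require Import structures.
From mathcomp Require Import all_boot all_order all_algebra.
From mathcomp Require Import all_classical all_reals all_analysis.
Set Implicit Arguments. Unset Strict Implicit. Unset Printing Implicit Defensive.
Import Order.TTheory GRing.Theory Num.Theory.
Local Open Scope ring_scope.

Section POC.
Variables (R : realType) (Q : finType).

(* Counter effects: a rule (p, c, q) is encoded by the probability
   P p c q; the rule belongs to delta iff P p c q > 0. *)
Definition effects : seq int := [:: -1; 0; 1].

(* Pz p c q = P^{=0}(p,c,q), Pp p c q = P^{>0}(p,c,q). *)
Definition is_pOC (Pz Pp : Q -> int -> Q -> R) : Prop :=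
  [/\ forall p c q, 0 <= Pz p c q /\ 0 <= Pp p c q,
      forall p c q, c \notin [:: 0; 1] -> Pz p c q = 0,
      forall p c q, c \notin effects -> Pp p c q = 0,
      forall p, \sum_(c <- effects) \sum_(q : Q) Pz p c q = 1 &
      forall p, \sum_(c <- effects) \sum_(q : Q) Pp p c q = 1].

Definition Amat (Pp : Q -> int -> Q -> R) (p q : Q) : R :=
  \sum_(c <- effects) Pp p c q.

Definition svec (Pp : Q -> int -> Q -> R) (p : Q) : R :=
  \sum_(c <- effects) \sum_(q : Q) Pp p c q * c%:~R.

Definition strongly_connected (Pp : Q -> int -> Q -> R) : Prop :=
  forall p q, connect [rel x y | 0 < Amat Pp x y] p q.

Definition invariant_dist (Pp : Q -> int -> Q -> R) (alpha : Q -> R) : Prop :=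
  [/\ forall q, 0 <= alpha q,
      \sum_(q : Q) alpha q = 1 &
      forall q, \sum_(p : Q) alpha p * Amat Pp p q = alpha q].

Definition trend (Pp : Q -> int -> Q -> R) (alpha : Q -> R) : R :=
  \sum_(p : Q) alpha p * svec Pp p.

Definition potential (Pp : Q -> int -> Q -> R) (t : R) (v : Q -> R) : Prop :=
  forall p, svec Pp p + \sum_(q : Q) Amat Pp p q * v q = v p + t.

(* |v| = v_max - v_min, written as the maximal difference v p - v q
   (equal to v_max - v_min for nonempty Q). *)
Definition vspan (v : Q -> R) : R :=
  \big[Num.max/0]_(p : Q) \big[Num.max/0]_(q : Q) (v p - v q).

(* hit n p i = probability that the run of M_A from p(i) reaches counter
   value zero within at most n steps. *)
Fixpoint hit (Pp : Q -> int -> Q -> R) (n : nat) (p : Q) (i : nat) : R :=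
  match n with
  | 0%N => if i == 0%N then 1 else 0
  | n'.+1 => if i == 0%N then 1 else
      \sum_(c <- effects) \sum_(q : Q) Pp p c q * hit Pp n' q (absz (i%:Z + c))
  end.

(* [p(i)↓]: probability of eventually reaching counter value zero
   = supremum (increasing limit) of the probabilities of reaching it
   within n steps. *)
Definition reach_zero (Pp : Q -> int -> Q -> R) (p : Q) (i : nat) : R :=
  sup (range (fun n => hit Pp n p i)).

End POC.

(* Main.v *)
Require Import Defs.
From HB Require Import structures.
From mathcomp Require Import all_boot all_order all_algebra.
From mathcomp Require Import all_classical all_reals all_analysis.
From mathcomp Require Import ring lra zify.
Import Order.TTheory GRing.Theory Num.Theory.
Local Open Scope ring_scope.

Lemma expR_bound (R : realType) (y : R) : y <= 1/2 -> expR y <= 1 + y + 2 * y^+2.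
Proof.
move=> hy.
have hF := expR_ge1Dx (- y).
have hEF := expRxMexpNx_1 y.
have hE := expR_gt0 y.
set E := expR y in hEF hE *; set F := expR (-y) in hF hEF *.
have h1 : E * (1 - y) <= 1 by nra.
nra.
Qed.

Section Proofs.
Set Implicit Arguments.
Variables (R : realType) (Q : finType) (Pz Pp : Q -> int -> Q -> R).
Hypothesis HA : is_pOC Pz Pp.

Lemma eff_sum (F : int -> R) :
  \sum_(c <- effects) F c = F (-1) + F 0 + F 1.
Proof. by rewrite /effects !big_cons big_nil addr0 addrA. Qed.

Lemma Pp_ge0 p c q : 0 <= Pp p c q.
Proof. by case: HA => H _ _ _ _; case: (H p c q). Qed.

Lemma Pp_out p c q : c \notin effects -> Pp p c q = 0.
Proof. by case: HA => _ _ H _ _; apply: H. Qed.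

Lemma Pp_sum p : \sum_(c <- effects) \sum_(q : Q) Pp p c q = 1.
Proof. by case: HA. Qed.

Lemma eff_cases (c : int) : c \in effects -> [\/ c = -1, c = 0 | c = 1].
Proof. by rewrite !inE => /or3P [/eqP->|/eqP->|/eqP->]; [constructor 1|constructor 2|constructor 3]. Qed.

Lemma sum2D (f g : int -> Q -> R) :
  \sum_(c <- effects) \sum_(q : Q) (f c q + g c q) =
  \sum_(c <- effects) \sum_(q : Q) f c q + \sum_(c <- effects) \sum_(q : Q) g c q.
Proof. rewrite -big_split; apply: eq_bigr => c _; by rewrite -big_split. Qed.

Lemma sum2Z (k : R) (f : int -> Q -> R) :
  \sum_(c <- effects) \sum_(q : Q) (k * f c q) =
  k * \sum_(c <- effects) \sum_(q : Q) f c q.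
Proof. rewrite mulr_sumr; apply: eq_bigr => c _; by rewrite mulr_sumr. Qed.

Lemma svec_le1 p : svec Pp p <= 1.
Proof.
rewrite /svec -[X in _ <= X](Pp_sum p) !eff_sum.
have h1 : \sum_(q : Q) Pp p (-1) q * (-1)%:~R <= 0.
  apply: sumr_le0 => q _; rewrite mulrN1 oppr_le0; exact: Pp_ge0.
have h2 : \sum_(q : Q) Pp p 0 q * 0%:~R = 0.
  by apply: big1 => q _; rewrite mulr0.
have h3 : \sum_(q : Q) Pp p 1 q * 1%:~R = \sum_(q : Q) Pp p 1 q.
  by apply: eq_bigr => q _; rewrite mulr1.
have h4 : 0 <= \sum_(q : Q) Pp p (-1) q by apply: sumr_ge0 => q _; exact: Pp_ge0.
have h5 : 0 <= \sum_(q : Q) Pp p 0 q by apply: sumr_ge0 => q _; exact: Pp_ge0.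
rewrite h2 h3; lra.
Qed.

Lemma trend_le1 alpha : invariant_dist Pp alpha -> trend Pp alpha <= 1.
Proof.
case=> a0 a1 _; rewrite /trend -a1; apply: ler_sum => p _.
by rewrite -[leRHS]mulr1; apply: ler_wpM2l => //; exact: svec_le1.
Qed.

Variable v : Q -> R.

Lemma vspan_ge p q : v p - v q <= vspan v.
Proof.
rewrite /vspan; apply: le_trans (le_bigmax _ _ p).
exact: (le_bigmax _ (fun q => v p - v q) q).
Qed.

Lemma vspan_ge0 : 0 <= vspan v.
Proof. exact: bigmax_ge_id. Qed.

Lemma sumX t p : potential Pp t v ->
  \sum_(c <- effects) \sum_(q : Q) Pp p c q * (c%:~R + v q - v p) = t.
Proof.
move=> Hv.
have -> : \sum_(c <- effects) \sum_(q : Q) Pp p c q * (c%:~R + v q - v p) =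
  \sum_(c <- effects) \sum_(q : Q) (Pp p c q * c%:~R) +
  \sum_(c <- effects) \sum_(q : Q) (Pp p c q * v q) +
  \sum_(c <- effects) \sum_(q : Q) (- v p * Pp p c q).
  rewrite -!sum2D; apply: eq_bigr => c _; apply: eq_bigr => q _; ring.
rewrite sum2Z Pp_sum.
have -> : \sum_(c <- effects) \sum_(q : Q) (Pp p c q * v q) =
   \sum_(q : Q) Amat Pp p q * v q.
  rewrite exchange_big /=; apply: eq_bigr => q _; by rewrite /Amat mulr_suml.
have := Hv p; rewrite /svec; lra.
Qed.

Lemma supermart t theta p : potential Pp t v -> 0 <= theta ->
  theta * (vspan v + 1) <= 1/2 -> 2 * theta * (vspan v + 1)^+2 <= t ->
  \sum_(c <- effects) \sum_(q : Q) Pp p c q * expR (- (theta * (c%:~R + v q - v p))) <= 1.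
Proof.
move=> Hv th0 th1 th2.
apply: (@le_trans _ _ (\sum_(c <- effects) \sum_(q : Q)
     (Pp p c q * (1 + 2 * theta^+2 * (vspan v + 1)^+2) + (- theta) * (Pp p c q * (c%:~R + v q - v p))))).
  apply: ler_sum => c _; apply: ler_sum => q _.
  case: (boolP (c \in effects)) => hc; last by rewrite Pp_out // !mul0r mulr0 addr0.
  rewrite [- theta * _]mulrCA -mulrDr; apply: ler_wpM2l; first exact: Pp_ge0.
  set X := c%:~R + v q - v p.
  have [hXl hXr] : -(vspan v + 1) <= X /\ X <= vspan v + 1.
    have h1 := vspan_ge p q; have h2 := vspan_ge q p.
    rewrite /X; case: (eff_cases c hc) => ->; rewrite ?intrN ?mulr1z ?mulr0z; lra.
  have hy : - (theta * X) <= 1/2 by nra.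
  have hb := @expR_bound R _ hy.
  have : X^+2 <= (vspan v + 1)^+2 by nra.
  nra.
have E1 : \sum_(c <- effects) \sum_(q : Q) (Pp p c q * (1 + 2 * theta^+2 * (vspan v + 1)^+2))
    = 1 + 2 * theta^+2 * (vspan v + 1)^+2.
  under eq_bigr do under eq_bigr do rewrite mulrC.
  by rewrite sum2Z Pp_sum mulr1.
rewrite sum2D E1 sum2Z (sumX p Hv).
nra.
Qed.

Lemma zero_case theta K p : 0 <= theta -> v p <= K ->
  1 <= expR (- (theta * ((0%N)%:R + v p - K))).
Proof.
move=> th0 hK.
have h := expR_ge1Dx (- (theta * ((0%N)%:R + v p - K))).
have hx : 0 <= - (theta * ((0%N)%:R + v p - K)) by rewrite mulr0n add0r; nra.
lra.
Qed.

Lemma absz_eff (i : nat) (c : int) : i != 0%N -> c \in effects ->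
  ((absz (i%:Z + c))%:R : R) = i%:R + c%:~R.
Proof.
move=> i0 hc.
have h : (0 <= i%:Z + c)%R by case: (eff_cases c hc) => ->; lia.
by rewrite natr_absz ger0_norm // intrD pmulrn.
Qed.

Lemma hit_bound theta K :
  0 <= theta -> (forall q, v q <= K) ->
  (forall p, \sum_(c <- effects) \sum_(q : Q)
      Pp p c q * expR (- (theta * (c%:~R + v q - v p))) <= 1) ->
  forall n p i, hit Pp n p i <= expR (- (theta * (i%:R + v p - K))).
Proof.
move=> th0 hK SM n; elim: n => [|n IH] p i.
  rewrite /=; case: ifP => [/eqP -> | _]; last exact: expR_ge0.
  exact: zero_case.
rewrite /=; case: ifP => [/eqP -> | /negbT i0]; first exact: zero_case.
set E0 := expR (- (theta * (i%:R + v p - K))).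
apply: (@le_trans _ _ (\sum_(c <- effects) \sum_(q : Q)
    (E0 * (Pp p c q * expR (- (theta * (c%:~R + v q - v p))))))); last first.
  by rewrite sum2Z -[leRHS]mulr1; apply: ler_wpM2l; [exact: expR_ge0 | exact: SM].
apply: ler_sum => c _; apply: ler_sum => q _.
case: (boolP (c \in effects)) => hc; last by rewrite Pp_out // !mul0r mulr0.
rewrite mulrCA; apply: ler_wpM2l; first exact: Pp_ge0.
apply: le_trans (IH q _) _.
rewrite absz_eff // /E0 -expRD le_eqVlt; apply/orP; left; apply/eqP; congr expR.
ring.
Qed.

End Proofs.

Theorem mainTheorem15 (R : realType) (Q : finType)
  (Pz Pp : Q -> int -> Q -> R) (HA : is_pOC Pz Pp)
  (Hsc : strongly_connected Pp)
  (alpha : Q -> R) (Halpha : invariant_dist Pp alpha)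
  (Ht : 0 < trend Pp alpha)
  (v : Q -> R) (Hv : potential Pp (trend Pp alpha) v) :
  let t := trend Pp alpha in
  let a := expR (- (t ^+ 2) / (2 * (vspan v + t + 1) ^+ 2)) in
  (0 < a < 1) /\
  forall c0 : nat, vspan v <= c0%:R ->
    (forall p0 : Q, reach_zero Pp p0 c0 <= a ^+ c0 / (1 - a)) /\
    (6 * (vspan v + t + 1) ^+ 3 / t ^+ 3 <= c0%:R ->
      forall p0 : Q, reach_zero Pp p0 c0 <= 1 / 2).
Proof.
move=> t a; subst t a.
have t1 := trend_le1 HA Halpha.
have s0 := @vspan_ge0 R Q v.
have key : forall theta, 0 < theta -> theta * (vspan v + 1) <= 1/2 ->
    2 * theta * (vspan v + 1)^+2 <= trend Pp alpha ->
    forall (c0 : nat) p0, reach_zero Pp p0 c0 <= expR (- (theta * (c0%:R - vspan v))).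
  move=> th th0 th1 th2 c0 p0.
  have SM (p : Q) := supermart HA th p Hv (ltW th0) th1 th2.
  pose K := \big[Num.max/v p0]_q v q.
  have hK q : v q <= K := le_bigmax _ _ q.
  have hK2 : K <= v p0 + vspan v.
    apply: bigmax_le; first lra.
    move=> q _; have := @vspan_ge R Q v q p0; lra.
  rewrite /reach_zero; apply: ge_sup.
    by exists (hit Pp 0 p0 c0); exists 0%N.
  move=> y [n _ <-].
  apply: le_trans (hit_bound HA v th K (ltW th0) hK SM n p0 c0) _.
  rewrite ler_expR; nra.
move: key Ht t1 s0; generalize (trend Pp alpha) (vspan v) => t s key Ht t1 s0.
have B1 : 1 <= s + t + 1 by lra.
have B0 : 0 < s + t + 1 by lra.
have B20 : 0 < 2 * (s + t + 1)^+2 by apply: mulr_gt0 => //; apply: exprn_gt0.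
pose th := t^+2 / (2 * (s + t + 1)^+2).
have hth : th * (2 * (s + t + 1)^+2) = t^+2 by rewrite /th divfK // gt_eqF.
have th0 : 0 < th by apply: divr_gt0 => //; apply: exprn_gt0.
have th1 : th * (s + 1) <= 1/2.
  rewrite -(ler_pM2r B20) mulrAC hth; nra.
have th2 : 2 * th * (s + 1)^+2 <= t.
  rewrite -(ler_pM2r B20).
  have -> : 2 * th * (s + 1)^+2 * (2 * (s + t + 1)^+2) = 2 * (s + 1)^+2 * (th * (2 * (s + t + 1)^+2)) by ring.
  rewrite hth; nra.
have ha : - t ^+ 2 / (2 * (s + t + 1) ^+ 2) = - th by rewrite /th mulNr.
rewrite ha; split.
  by apply/andP; split; [exact: expR_gt0 | rewrite expR_lt1 oppr_lt0].
move=> c0 hc0; split.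
  move=> p0; apply: le_trans (key th th0 th1 th2 c0 p0) _.
  have hA1 := expR_ge1Dx (- th).
  have hA0 : 0 < 1 - expR (- th) by rewrite subr_gt0 expR_lt1 oppr_lt0.
  rewrite ler_pdivlMr // -expRM_natl.
  have -> : - (th * (c0%:R - s)) = c0%:R * - th + th * s by ring.
  rewrite expRD -mulrA -[leRHS]mulr1; apply: ler_wpM2l; first exact: expR_ge0.
  have hF := expR_ge1Dx (- (th * s)).
  have hEF := expRxMexpNx_1 (th * s).
  have hE := expR_gt0 (th * s).
  have hts : 0 <= th * s by apply: mulr_ge0 => //; exact: ltW.
  set E := expR (th * s) in hEF hE *; set F := expR (- (th * s)) in hF hEF *.
  set A := expR (- th) in hA1 hA0 *.
  nra.
move=> hc p0; apply: le_trans (key th th0 th1 th2 c0 p0) _.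
have t0 : t != 0 by rewrite gt_eqF.
have e1 : th * (6 * (s + t + 1) ^+ 3 / t ^+ 3) = 3 * (s + t + 1) / t.
  rewrite /th; field; apply/andP; split => //; rewrite gt_eqF //.
have e2 : 3 <= 3 * (s + t + 1) / t by rewrite ler_pdivlMr //; lra.
have e3 : th * (6 * (s + t + 1) ^+ 3 / t ^+ 3) <= th * c0%:R by rewrite ler_pM2l.
have hy : 1 <= th * (c0%:R - s) by nra.
set y := th * (c0%:R - s) in hy *.
have hF := expR_ge1Dx y.
have hEF := expRxMexpNx_1 y.
have hE := expR_gt0 (- y).
set E := expR y in hEF hF *; set F := expR (- y) in hE hEF *.
nra.
Qed.
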